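(* Let $(\mathcal M,X,\bot)$ be a non trivial and accessible concurrent system. Then its characteristic root $r$ satisfies $r<\infty$.
   Context: A trace monoid $\mathcal M=\mathcal M(\Sigma,I)$ is $\langle\Sigma\mid ab=ba\ ((a,b)\in I)\rangle$ with $\Sigma$ finite and $I$ irreflexive symmetric; $|x|$ is trace length. A concurrent system $(\mathcal M,X,\bot)$: $X$ a finite set, $\bot\notin X$, a right action of $\mathcal M$ on $X\cup\{\bot\}$ with $\bot\cdot x=\bot$ for all $x$. Non trivial: there exist a state $\alpha$ and a letter $a$ with $\alpha\cdot a\neq\bot$. Accessible: for all $\alpha,\beta\in X$ there is $x$ with $\alpha\cdot x=\beta$. The characteristic root $r\in(0,+\infty]$ is the minimum over $\alpha,\beta\in X$ of the radius of convergence of $\sum_{n\ge0}\#\{x\in\mathcal M:|x|=n,\ \alpha\cdot x=\beta\}z^n$. *)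

(* Defs.v *)
From mathcomp Require Import all_boot.
From Stdlib Require Import Reals.
From Coquelicot Require Import Coquelicot.

Set Implicit Arguments.
Unset Strict Implicit.
Unset Printing Implicit Defensive.

Definition indep_rel (Sigma : finType) (I : rel Sigma) : Prop :=
  irreflexive I /\ symmetric I.

Definition swap_step (Sigma : finType) (I : rel Sigma) (n : nat)
    (w w' : n.-tuple Sigma) : bool :=
  [exists i : 'I_n, exists a : Sigma, exists b : Sigma,
     [&& I a b,
         val w == take i w ++ [:: a; b] ++ drop i.+2 w &
         val w' == take i w ++ [:: b; a] ++ drop i.+2 w]].

(* The trace of length n represented by the word w: its equivalence class
   under the congruence generated by the commutations (a,b) in I. *)
Definition trace_class (Sigma : finType) (I : rel Sigma) (n : nat)
    (w : n.-tuple Sigma) : {set n.-tuple Sigma} :=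
  [set w' | connect (@swap_step Sigma I n) w w'].

(* A concurrent system (M(Sigma,I), X, bot): the states X ∪ {bot} are encoded
   as option X (None = bot).  A right action of M(Sigma,I) on option X is the
   same as an action of the generators, [delta], which respects the defining
   relations ab = ba for (a,b) in I; it is absorbing at bot. *)
Record concurrent_system (Sigma : finType) (I : rel Sigma) := ConcSys {
  cs_state : finType;
  cs_delta : option cs_state -> Sigma -> option cs_state;
  cs_bot : forall a, cs_delta None a = None;
  cs_comm : forall s a b, I a b ->
      cs_delta (cs_delta s a) b = cs_delta (cs_delta s b) a
}.

Definition cs_act (Sigma : finType) (I : rel Sigma)
    (S : concurrent_system I) (s : option (cs_state S)) (w : seq Sigma)
    : option (cs_state S) :=
  foldl (@cs_delta Sigma I S) s w.

Definition non_trivial (Sigma : finType) (I : rel Sigma)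
    (S : concurrent_system I) : Prop :=
  exists (alpha : cs_state S) (a : Sigma), cs_delta (Some alpha) a <> None.

Definition accessible (Sigma : finType) (I : rel Sigma)
    (S : concurrent_system I) : Prop :=
  forall alpha beta : cs_state S,
    exists w : seq Sigma, cs_act (Some alpha) w = Some beta.

Definition count_traces (Sigma : finType) (I : rel Sigma)
    (S : concurrent_system I) (alpha beta : cs_state S) (n : nat) : nat :=
  #|[set trace_class I w | w in
       [set w : n.-tuple Sigma | cs_act (Some alpha) w == Some beta]]|.

Definition radius (Sigma : finType) (I : rel Sigma)
    (S : concurrent_system I) (alpha beta : cs_state S) : Rbar :=
  CV_radius (fun n => INR (count_traces alpha beta n)).

(* Characteristic root: minimum over all pairs (alpha, beta) of the radii
   (p_infty if X were empty). *)
Definition char_root (Sigma : finType) (I : rel Sigma)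
    (S : concurrent_system I) : Rbar :=
  foldr (fun p m => Rbar_min (radius p.1 p.2) m) p_infty
        (enum [set: cs_state S * cs_state S]).

(* Main.v *)
Require Import Defs.
From mathcomp Require Import all_boot.
From Stdlib Require Import Reals Lra.
From Coquelicot Require Import Coquelicot.
Local Open Scope nat_scope.

Lemma count_pos (Sigma : finType) (I : rel Sigma) (S : concurrent_system I)
  (alpha beta : cs_state S) (w : seq Sigma) :
  cs_act (Some alpha) w = Some beta -> (0 < count_traces alpha beta (size w)).
Proof.
move=> Hw; rewrite /count_traces; apply/card_gt0P.
exists (trace_class I (in_tuple w)); apply/imsetP; exists (in_tuple w) => //.
by rewrite inE /=; apply/eqP.
Qed.

Lemma act_pow (Sigma : finType) (I : rel Sigma) (S : concurrent_system I)
  (alpha : cs_state S) (u : seq Sigma) :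
  cs_act (Some alpha) u = Some alpha -> forall m,
  cs_act (Some alpha) (flatten (nseq m u)) = Some alpha.
Proof.
move=> Hu; elim=> [|m IH] //=.
by rewrite /cs_act foldl_cat; rewrite /cs_act in Hu; rewrite Hu.
Qed.

Lemma foldr_min_le (T : eqType) (f : T -> Rbar) (l : seq T) (p : T) :
  p \in l -> Rbar_le (foldr (fun q m => Rbar_min (f q) m) p_infty l) (f p).
Proof.
elim: l => [|q l IH] //=; rewrite inE => /orP [/eqP <-|Hp].
  exact: Rbar_min_l.
apply: Rbar_le_trans (Rbar_min_r _ _) (IH Hp).
Qed.

Theorem proposition2 (Sigma : finType) (I : rel Sigma)
    (HI : indep_rel I) (S : concurrent_system I) :
  non_trivial S -> accessible S -> Rbar_lt (char_root S) p_infty.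
Proof.
move=> [alpha [a Ha]] Hacc.
case Hg: (cs_delta (Some alpha) a) => [gamma|]; last by [].
have [w Hw] := Hacc gamma alpha.
set u := a :: w.
have Hu : cs_act (Some alpha) u = Some alpha by rewrite /cs_act /= Hg.
have Hle : Rbar_le (char_root S) (radius alpha alpha).
  rewrite /char_root.
  have := @foldr_min_le _ (fun p : cs_state S * cs_state S => radius p.1 p.2)
    (enum [set: cs_state S * cs_state S]) (alpha, alpha).
  by rewrite mem_enum inE; apply.
suff Hr : Rbar_lt (radius alpha alpha) p_infty.
  case: (char_root S) Hle Hr => //; case: (radius alpha alpha) => //.
case Hrad: (radius alpha alpha) => [r| |] //.
have H1 : Rbar_lt (Rabs 1) (radius alpha alpha) by rewrite Hrad.
have /ex_series_lim_0 Hlim := CV_radius_inside _ _ H1.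
apply is_lim_seq_spec in Hlim.
have [N HN] := Hlim (mkposreal 1 Rlt_0_1).
have HNk : (N <= size (flatten (nseq N u))).
  rewrite size_flatten /shape map_nseq sumn_nseq /= mulnC.
  by rewrite /= ?mulSn ?mulnS leq_addr.
have := HN _ (elimT leP HNk).
have Hc := @count_pos _ _ _ _ _ _ (@act_pow _ _ _ _ _ Hu N).
rewrite pow_n_pow pow1 scal_one Rminus_0_r /=.
move: Hc; set c := count_traces _ _ _ => Hc.
have : (1 <= INR c)%R by apply: (le_INR 1); apply/leP.
rewrite Rabs_pos_eq; [lra|apply: pos_INR].
Qed.
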